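(* Let $v\in V^X$ with $I(v)=J_\ell$ for some $\ell\in\{1,\dots,N-1\}$, let $k\in\mathbb{N}$ and $i\in\Pi$, and suppose there exists $c\in\mathbb{N}$ such that $\sup\{\mathrm{Cost}_i(\rho)\mid\rho\in\Lambda^k(v)\}=c$. Then $c\le\mathcal{O}\big(|V|^{(|V|+3)(|\Pi|+2)}\big)$.
   Context: Let $\mathcal{G}$ be a quantitative reachability game on an arena $G=(\Pi,V,(V_i)_{i\in\Pi},E)$ (finite player set $\Pi$, finite vertex set $V$ with $|V|\ge2$, $|\Pi|\le|V|$, partition $(V_i)$, every vertex has a successor) with targets $F_i\subseteq V$ and costs $\mathrm{Cost}_i(\rho)=$ least $k$ with $\rho_k\in F_i$ (or $+\infty$); $v_0\in V$. Extended game: arena $X$ with vertices $V^X=V\times2^\Pi$, edges $((v,I),(v',I'))\in E^X$ iff $(v,v')\in E$ and $I'=I\cup\{i:v'\in F_i\}$, $(v,I)\in V^X_i$ iff $v\in V_i$, targets $F^X_i=\{(v,I):i\in I\}$ with corresponding reachability costs $\mathrm{Cost}_i$; $x_0=(v_0,\{i:v_0\in F_i\})$; $I(u)$ is the second component. $\mathcal{I}$ is the set of $I$ with some $(v,I)$ reachable from $x_0$, $N=|\mathcal{I}|$, $J_1<\dots<J_N$ a fixed total order of $\mathcal{I}$ extending $I<I'$ iff $I\ne I'$ and some $(v',I')$ is reachable from some $(v,I)$. $V^{\ge J_n}=\{(v,J_m):v\in V,m\ge n\}$. Labelings: for $\lambda:V^X\to\mathbb{N}\cup\{+\infty\}$,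 a play $\rho$ of $X$ is $\lambda$-consistent if $\mathrm{Cost}_i(\rho_{\ge n})\le\lambda(\rho_n)$ whenever $\rho_n\in V^X_i$. $\lambda^0(u)=0$ if $u\in V^X_i$ and $i\in I(u)$, else $+\infty$. The update of $\lambda^k$ w.r.t. $V^{\ge J_n}$ keeps values outside $V^{\ge J_n}$ and for $u\in V^{\ge J_n}\cap V^X_i$ sets $\lambda^{k+1}(u)=0$ if $i\in I(u)$, otherwise $1+\min_{(u,u')\in E^X}\sup\{\mathrm{Cost}_i(\rho):\rho\in\Lambda^k(u')\}$ ($1+(+\infty)=+\infty$). The sequence is generated by $n_0=N$, $\lambda^{k+1}=$ update of $\lambda^k$ w.r.t. $V^{\ge J_{n_k}}$, $n_{k+1}=n_k-1$ if $\lambda^{k+1}=\lambda^k$ and $n_k>1$, else $n_{k+1}=n_k$. $\Lambda^k(v)$ is the set of $\lambda^k$-consistent plays from $v$. The $\mathcal{O}$ is with respect to the game parameters $|V|,|\Pi|$. *)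

(* Defs.v *)
From Stdlib Require Import ClassicalEpsilon.
From mathcomp Require Import all_boot.


(* A quantitative reachability game: players Pl, vertices Vt, the partition
   (V_i) given by the owner map, edges, targets F_i, initial vertex v_0. *)
Record game := Game {
  Pl : finType;
  Vt : finType;
  owner : Vt -> Pl;
  edge : rel Vt;
  target : Pl -> {set Vt};
  init : Vt }.

Set Implicit Arguments.
Unset Strict Implicit.
Unset Printing Implicit Defensive.

Definition xvert (G : game) : finType := (Vt G * {set Pl G})%type.

Definition xedge (G : game) : rel (xvert G) :=
  fun u u' => edge G u.1 u'.1 && (u'.2 == u.2 :|: [set i | u'.1 \in target G i]).

Definition xowner (G : game) (u : xvert G) : Pl G := owner G u.1.

Definition xinit (G : game) : xvert G := (init G, [set i | init G \in target G i]).

Definition play (G : game) (rho : nat -> xvert G) : Prop :=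
  forall n, @xedge G (rho n) (rho n.+1).

Definition suffix (G : game) (rho : nat -> xvert G) (n : nat) : nat -> xvert G :=
  fun m => rho (n + m).

(* ---------- N u {+oo}, encoded as option nat with None = +oo ---------- *)
Definition ele (x y : option nat) : Prop :=
  match x, y with
  | _, None => True
  | None, Some _ => False
  | Some a, Some b => a <= b
  end.

Definition is_esup (S : option nat -> Prop) (s : option nat) : Prop :=
  (forall x, S x -> ele x s) /\ (forall t, (forall x, S x -> ele x t) -> ele s t).

Definition esup (S : option nat -> Prop) : option nat :=
  epsilon (inhabits None) (is_esup S).

Definition emin (x y : option nat) : option nat :=
  match x, y with
  | None, _ => y
  | _, None => x
  | Some a, Some b => Some (minn a b)
  end.

Definition esucc (x : option nat) : option nat := omap S x.

Definition is_first (p : pred nat) (o : option nat) : Prop :=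
  match o with
  | Some k => p k /\ (forall j, p j -> k <= j)
  | None => forall j, ~~ p j
  end.

Definition first_hit (p : pred nat) : option nat :=
  epsilon (inhabits None) (is_first p).

(* Cost_i(rho) = least k with rho_k in F^X_i = {(v,I) | i \in I} *)
Definition cost (G : game) (i : Pl G) (rho : nat -> xvert G) : option nat :=
  first_hit (fun k => i \in (rho k).2).

Definition labeling (G : game) := xvert G -> option nat.

Definition consistent (G : game) (lam : labeling G) (rho : nat -> xvert G) : Prop :=
  forall n, ele (cost (xowner (rho n)) (suffix rho n)) (lam (rho n)).

Definition Lambda (G : game) (lam : labeling G) (u : xvert G) (rho : nat -> xvert G) : Prop :=
  [/\ play rho, rho 0 = u & consistent lam rho].

Definition sup_cost (G : game) (lam : labeling G) (i : Pl G) (u : xvert G) : option nat :=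
  esup (fun x => exists rho, Lambda lam u rho /\ x = cost i rho).

Definition lambda0 (G : game) : labeling G :=
  fun u => if xowner u \in u.2 then Some 0 else None.

(* J is the list [J_1; ...; J_N] *)
Definition reachI (G : game) (I : {set Pl G}) : Prop :=
  exists v : Vt G, connect (@xedge G) (@xinit G) ((v, I) : xvert G).

Definition valid_order (G : game) (J : seq {set Pl G}) : Prop :=
  [/\ uniq J,
      (forall I, I \in J <-> reachI I) &
      (forall u u' : xvert G, connect (@xedge G) u u' -> u.2 != u'.2 ->
         u.2 \in J -> u'.2 \in J -> index u.2 J < index u'.2 J)].

(* J_n, 1-indexed *)
Definition Jn (G : game) (J : seq {set Pl G}) (n : nat) : {set Pl G} := nth set0 J n.-1.

Definition in_geq (G : game) (J : seq {set Pl G}) (n : nat) (u : xvert G) : bool :=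
  (u.2 \in J) && (n.-1 <= index u.2 J).

Definition update (G : game) (J : seq {set Pl G}) (lam : labeling G) (n : nat) : labeling G :=
  fun u =>
    if in_geq J n u then
      if xowner u \in u.2 then Some 0
      else esucc (\big[emin/None]_(u' | @xedge G u u') sup_cost lam (xowner u) u')
    else lam u.

Definition step (G : game) (J : seq {set Pl G}) (s : labeling G * nat) : labeling G * nat :=
  let: (lam, n) := s in
  let lam' := update J lam n in
  (lam', if [forall u, lam' u == lam u] && (1 < n) then n.-1 else n).

Definition lam_seq (G : game) (J : seq {set Pl G}) (k : nat) : labeling G * nat :=
  iter k (step J) (@lambda0 G, size J).

Definition lam_k (G : game) (J : seq {set Pl G}) (k : nat) : labeling G := (lam_seq J k).1.

(* Main.v *)
Require Import Defs.
From mathcomp Require Import all_boot.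
From mathcomp Require Import zify.
From Stdlib Require Import ClassicalEpsilon Classical FunctionalExtensionality.
Set Implicit Arguments. Unset Strict Implicit. Unset Printing Implicit Defensive.

Lemma ele_refl x : ele x x.
Proof. by case: x => //= a. Qed.

Lemma ele_trans x y z : ele x y -> ele y z -> ele x z.
Proof. case: x => [a|]; case: y => [b|]; case: z => [c|] //=; lia. Qed.

Lemma esup_exists S : exists s, is_esup S s.
Proof.
case: (classic (exists x, S x /\ x = None)) => [[x [Sx xN]]|HN].
  subst x; exists None; split => [y _|t Ht]; first by case: y.
  exact: Ht _ Sx.
case: (classic (exists B, forall x, S x -> ele x (Some B))) => [HB|HB].
  pose pb := fun B => if excluded_middle_informative (forall x, S x -> ele x (Some B)) then true else false.
  have exB : exists B, pb B.
    case: HB => B HB; exists B; rewrite /pb; by case: excluded_middle_informative.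
  case: (ex_minnP exB) => B0 pB0 minB0.
  exists (Some B0); split.
    move: pB0; rewrite /pb; case: excluded_middle_informative => // H _; exact: H.
  case=> [T|] Ht //=; apply: minB0; rewrite /pb; by case: excluded_middle_informative.
exists None; split => [y _|[T|] Ht] //=; first by case: y.
by case: HB; exists T.
Qed.

Lemma esup_spec S : is_esup S (esup S).
Proof. rewrite /esup; apply: epsilon_spec; exact: esup_exists. Qed.

Lemma esup_mono (S S' : option nat -> Prop) :
  (forall x, S x -> S' x) -> ele (esup S) (esup S').
Proof.
move=> H; have [ub _] := esup_spec S'; have [_ least] := esup_spec S.
apply: least => x Sx; apply: ub; exact: H.
Qed.

Lemma first_exists (p : pred nat) : exists o, is_first p o.
Proof.
case: (classic (exists k, p k)) => [H|H].
  case: (ex_minnP H) => m pm mmin; exists (Some m); by split.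
exists None => j; apply/negP => pj; apply: H; by exists j.
Qed.

Lemma first_spec p : is_first p (first_hit p).
Proof. rewrite /first_hit; apply: epsilon_spec; exact: first_exists. Qed.

Lemma first_unique p o o' : is_first p o -> is_first p o' -> o = o'.
Proof.
case: o => [k|]; case: o' => [k'|] //=.
- case=> pk mk [pk' mk']; congr Some; apply/eqP; rewrite eqn_leq mk // mk' //.
- by case=> pk _ H; move: (H k); rewrite pk.
- by move=> H [pk _]; move: (H k'); rewrite pk.
Qed.

Lemma costE_Some (G : game) (i : Pl G) (f : nat -> xvert G) e :
  cost i f = Some e <-> (i \in (f e).2 /\ forall m, m < e -> i \notin (f m).2).
Proof.
split.
  move=> H; have := first_spec (fun k => i \in (f k).2).
  rewrite -/(cost i f) H /= => -[pe mn]; split => // m lt.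
  apply/negP => pm; have := mn m pm; lia.
case=> pe mn; apply: first_unique (first_spec _) _; split => // j pj.
rewrite leqNgt; apply/negP => lt; have := mn j lt; by rewrite pj.
Qed.

Lemma costE_None (G : game) (i : Pl G) (f : nat -> xvert G) :
  cost i f = None -> forall m, i \notin (f m).2.
Proof.
move=> H; have := first_spec (fun k => i \in (f k).2).
by rewrite -/(cost i f) H /=.
Qed.

Lemma cost_agree (G : game) (i : Pl G) (f g : nat -> xvert G) e0 :
  i \in (f e0).2 -> (forall m, m <= e0 -> f m = g m) -> cost i f = cost i g.
Proof.
move=> fe0 fg.
have ex : exists k, (fun k => i \in (f k).2) k by exists e0.
case: (ex_minnP ex) => e fe emin.
have lee : e <= e0 by apply: emin.
have -> : cost i f = Some e.
  apply/costE_Some; split => // m lt; apply/negP => fm; have := emin m fm; lia.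
symmetry; apply/costE_Some; split; first by rewrite -fg.
move=> m lt; rewrite -fg; last lia.
apply/negP => fm; have := emin m fm; lia.
Qed.

Lemma play_mono (G : game) (rho : nat -> xvert G) :
  play rho -> forall n m, n <= m -> (rho n).2 \subset (rho m).2.
Proof.
move=> pl n m le; rewrite -(subnKC le); elim: (m - n) => [|d IH]; first by rewrite addn0.
apply: subset_trans IH _; rewrite addnS.
have := pl (n + d); case/andP => _ /eqP ->; exact: subsetUl.
Qed.

Lemma pump (G : game) (lam : labeling G) (j : Pl G) (rho : nat -> xvert G) a b c :
  play rho -> consistent lam rho -> cost j rho = Some c ->
  a < b -> b <= c -> rho a = rho b ->
  (forall n, n < b -> lam (rho n) != None -> xowner (rho n) \in (rho b).2) ->
  exists rho', [/\ play rho', rho' 0 = rho 0, consistent lam rho'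
                 & cost j rho' = Some (c + (b - a))].
Proof.
move=> pl cons cj ab bc eab clean.
set p := b - a.
pose rho' := fun t => if t < b then rho t else rho (t - p).
have rhoge : forall t, b <= t -> rho' t = rho (t - p).
  by move=> t bt; rewrite /rho' ltnNge bt.
have rholt : forall t, t < b -> rho' t = rho t.
  by move=> t bt; rewrite /rho' bt.
exists rho'; split.
- move=> t; case: (ltnP t.+1 b) => h.
    rewrite !rholt //; try lia; exact: pl.
  case: (ltnP t b) => h2.
    have tb : t.+1 = b by lia.
    rewrite rholt // rhoge ?tb //.
    have -> : b - p = a by rewrite /p; lia.
    rewrite eab -tb; exact: pl.
  rewrite (rhoge t) // (rhoge t.+1); last lia.
  have -> : t.+1 - p = (t - p).+1 by rewrite /p; lia.
  exact: pl.
- by rewrite rholt //; lia.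
- move=> n; case: (ltnP n b) => nb.
    rewrite rholt //.
    case E: (lam (rho n)) => [bn|]; last by case: (cost _ _).
    have own : xowner (rho n) \in (rho b).2 by apply: clean => //; rewrite E.
    rewrite -E.
    have -> : cost (xowner (rho n)) (Defs.suffix rho' n) = cost (xowner (rho n)) (Defs.suffix rho n).
      symmetry; apply: (@cost_agree _ _ _ _ (a - n)).
        rewrite /Defs.suffix; have le1 : a <= n + (a - n) by lia.
        apply: (subsetP (play_mono pl le1)); by rewrite eab.
      move=> m le; rewrite /Defs.suffix rholt //; lia.
    exact: cons.
  rewrite rhoge //.
  have -> : Defs.suffix rho' n = Defs.suffix rho (n - p).
    apply: functional_extensionality => m; rewrite /Defs.suffix rhoge; last lia.
    congr rho; rewrite /p; lia.
  exact: cons.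
- case/costE_Some: cj => jc jlt.
  apply/costE_Some; split.
    rewrite rhoge; last lia.
    have -> : c + (b - a) - p = c by rewrite /p; lia.
    done.
  move=> m lt; case: (ltnP m b) => mb.
    rewrite rholt //; apply: jlt; lia.
  rewrite rhoge //; apply: jlt; rewrite /p; lia.
Qed.

Lemma card_window N (A : {set 'I_N}) L :
  (forall x y, x \in A -> y \in A -> x < y + L) -> #|A| <= L.
Proof.
case: L => [|L] H.
  rewrite leqn0 cards_eq0; apply/eqP/setP => x; rewrite inE; apply/negP => xA.
  by have := H x x xA xA; rewrite addn0 ltnn.
pose f := fun x : 'I_N => (Ordinal (ltn_pmod x (ltn0Sn L)) : 'I_L.+1).
have inj : {in A &, injective f}.
  move=> x y xA yA /(congr1 val) /= e; apply/val_inj => /=.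
  have h1 := H x y xA yA; have h2 := H y x yA xA.
  wlog le : x y xA yA e h1 h2 / y <= x.
    move=> W; case: (leqP y x) => l; first exact: W.
    symmetry; apply: W => //; lia.
  move/eqP: e; rewrite eqn_mod_dvd // => d.
  case: (posnP (x - y)) => [z|p]; first lia.
  have := dvdn_leq p d; lia.
rewrite -(card_in_imset inj); apply: leq_trans (max_card _) _; by rewrite card_ord.
Qed.

Lemma card_bigcup_le (T I : finType) (F : I -> {set T}) :
  #|\bigcup_(i : I) F i| <= \sum_(i : I) #|F i|.
Proof.
elim/big_rec2: _ => [|i n U _ le]; first by rewrite cards0.
apply: leq_trans (leq_card_setU _ _).1 _; by rewrite leq_add2l.
Qed.

Lemma find_cycle (G : game) (lam : labeling G) (rho : nat -> xvert G) L c :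
  play rho -> consistent lam rho ->
  (forall n bb, lam (rho n) = Some bb -> bb <= L) ->
  #|Pl G| * L + #|Vt G| * (#|Pl G|).+1 < c ->
  exists a b, [/\ a < b, b <= c, rho a = rho b &
     forall n, n < b -> lam (rho n) != None -> xowner (rho n) \in (rho b).2].
Proof.
move=> pl cons HL lt.
pose cleanb (t : nat) := [forall n : 'I_t, (lam (rho n) != None) ==> (xowner (rho n) \in (rho t).2)].
pose NC := [set t : 'I_c.+1 | ~~ cleanb t].
pose A := fun p : Pl G => [set t : 'I_c.+1 | (p \notin (rho t).2) && (p \in (rho (t + L)).2)].
have NCsub : NC \subset \bigcup_p A p.
  apply/subsetP => t; rewrite inE => /forallPn [n]; rewrite negb_imply => /andP [ln own].
  case E: (lam (rho n)) ln => [bn|] // _.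
  have bnL := HL _ _ E.
  have := cons n; rewrite E.
  case Ec: (cost _ _) => [e|] //= le.
  case/costE_Some: Ec => hit _.
  apply/bigcupP; exists (xowner (rho n)) => //; rewrite inE own /=.
  have le2 : n + e <= t + L by have := ltn_ord n; lia.
  exact: (subsetP (play_mono pl le2)) hit.
have cardA : forall p, #|A p| <= L.
  move=> p; apply: card_window => x y; rewrite !inE => /andP [nx _] /andP [_ py].
  rewrite ltnNge; apply/negP => le; move/negP: nx; apply; exact: (subsetP (play_mono pl le)) py.
have cardNC : #|NC| <= #|Pl G| * L.
  apply: leq_trans (subset_leq_card NCsub) _; apply: leq_trans (@card_bigcup_le _ (Pl G) A) _.
  have h : \sum_(i : Pl G) #|A i| <= \sum_(i : Pl G) L by apply: leq_sum => i _; exact: cardA.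
  apply: leq_trans h _; by rewrite sum_nat_const.
pose CL := ~: NC.
have cardCL : #|Vt G| * (#|Pl G|).+1 < #|CL|.
  have := cardsC NC; rewrite card_ord /CL => e; lia.
pose f := fun t : 'I_c.+1 => ((rho t).1, (inord #|(rho t).2| : 'I_(#|Pl G|).+1)).
have ninj : ~ {in CL &, injective f}.
  move=> inj; have := card_in_imset inj; have := max_card (f @: CL).
  rewrite card_prod !card_ord => le eq; lia.
have [x [y [xC yC fxy nxy]]] : exists x y, [/\ x \in CL, y \in CL, f x = f y & x != y].
  apply: NNPP => H; apply: ninj => x y xC yC fxy; apply/eqP; apply: NNPP => ne.
  apply H; exists x, y; split => //; exact/negP.
have main : forall x y : 'I_c.+1, x \in CL -> y \in CL -> f x = f y -> x < y ->
   exists a b, [/\ a < b, b <= c, rho a = rho b &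
     forall n, n < b -> lam (rho n) != None -> xowner (rho n) \in (rho b).2].
  move=> {x y xC yC fxy nxy} x y xC yC fxy xy; exists x, y; split => //.
  - by have := ltn_ord y; lia.
  - case: fxy => e1 e2.
    have ce : #|(rho x).2| = #|(rho y).2|.
      have := max_card (rho x).2; have := max_card (rho y).2 => h1 h2.
      by move/(congr1 val): e2; rewrite /= !inordK.
    have sub := play_mono pl (ltnW xy).
    have : (rho x).2 == (rho y).2 by rewrite eqEcard sub ce leqnn.
    move/eqP; move: e1; case: (rho x) => ??; case: (rho y) => ?? /= -> -> //.
  - move: yC; rewrite inE inE negbK => /forallP cl n ny ln.
    by have := cl (Ordinal ny); rewrite /= ln.
case: (ltngtP x y) => l.
- exact: main xC yC fxy l.
- exact: main yC xC (esym fxy) l.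
- by move: nxy; rewrite (val_inj l) eqxx.
Qed.

Lemma key (G : game) (lam : labeling G) (j : Pl G) (w : xvert G) L s :
  (forall x : xvert G, w.2 \subset x.2 -> forall bb, lam x = Some bb -> bb <= L) ->
  sup_cost lam j w = Some s -> s <= #|Pl G| * L + #|Vt G| * (#|Pl G|).+1.
Proof.
move=> HL Hs; rewrite leqNgt; apply/negP => lt.
have sp := esup_spec (fun x => exists rho, Lambda lam w rho /\ x = cost j rho).
change (is_esup (fun x => exists rho, Lambda lam w rho /\ x = cost j rho) (sup_cost lam j w)) in sp.
rewrite Hs in sp; case: sp => ub least.
have [x [[rho [[pl r0 cons] ->]] nle]] :
    exists x, (exists rho, Lambda lam w rho /\ x = cost j rho) /\ ~ ele x (Some s.-1).
  apply: NNPP => H.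
  have : ele (Some s) (Some s.-1).
    apply: least => x Sx; apply: NNPP => nx; apply: H; exists x; by split.
  rewrite /=; lia.
have := ub _ (ex_intro _ rho (conj (And3 pl r0 cons) erefl)).
case Ec: (cost j rho) nle => [c|] //= nle le.
have cs : c = s by lia.
subst c.
have HL' : forall n bb, lam (rho n) = Some bb -> bb <= L.
  move=> n bb E; apply: (HL (rho n) _ bb E); rewrite -r0. have := @play_mono _ _ pl 0 n (leq0n n). exact.
have [a [b [ab bc eab cl]]] := find_cycle pl cons HL' lt.
have [rho' [pl' r0' cons' c']] := pump pl cons Ec ab bc eab cl.
have := ub _ (ex_intro _ rho' (conj (And3 pl' (etrans r0' r0) cons') (esym c'))).
rewrite /=; lia.
Qed.

Definition nk (G : game) (J : seq {set Pl G}) k := (lam_seq J k).2.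

Lemma lam_kS (G : game) (J : seq {set Pl G}) k :
  lam_k J k.+1 = update J (lam_k J k) (nk J k).
Proof. rewrite /lam_k /nk /lam_seq iterS; by case: (iter k _ _). Qed.

Lemma nkS (G : game) (J : seq {set Pl G}) k : nk J k.+1 <= nk J k.
Proof.
rewrite /nk /lam_seq iterS; case: (iter k _ _) => lam n /=.
case: ifP => _ //; exact: leq_pred.
Qed.

Lemma in_geq_anti (G : game) (J : seq {set Pl G}) n n' u :
  n' <= n -> in_geq J n u -> in_geq J n' u.
Proof. rewrite /in_geq => le /andP [-> h] /=; apply: leq_trans h; rewrite -!subn1; lia. Qed.

Lemma stay0 (G : game) (J : seq {set Pl G}) k u :
  ~~ in_geq J (nk J k) u -> lam_k J k u = lambda0 u.
Proof.
elim: k => [|k IH] //= h.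
have h' : ~~ in_geq J (nk J k) u.
  apply: contra h; apply: in_geq_anti; exact: nkS.
by rewrite lam_kS /update (negbTE h') IH.
Qed.

Definition lle (G : game) (l l' : labeling G) := forall u, ele (l u) (l' u).

Lemma Lambda_mono (G : game) (l l' : labeling G) u rho :
  lle l l' -> Lambda l u rho -> Lambda l' u rho.
Proof.
move=> le [pl r0 cons]; split => // n; apply: ele_trans (cons n) _; exact: le.
Qed.

Lemma sup_cost_mono (G : game) (l l' : labeling G) i u :
  lle l l' -> ele (sup_cost l i u) (sup_cost l' i u).
Proof.
move=> le; apply: esup_mono => x [rho [L ->]]; exists rho; split => //.
exact: Lambda_mono L.
Qed.

Lemma emin_mono x1 x2 y1 y2 : ele x1 x2 -> ele y1 y2 -> ele (emin x1 y1) (emin x2 y2).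
Proof.
case: x1 => [a1|]; case: x2 => [a2|]; case: y1 => [b1|]; case: y2 => [b2|] //=; lia.
Qed.

Lemma bigmin_mono (T : finType) (P : pred T) (F F' : T -> option nat) :
  (forall w, ele (F w) (F' w)) ->
  ele (\big[emin/None]_(w | P w) F w) (\big[emin/None]_(w | P w) F' w).
Proof.
move=> h; apply: (big_ind2 ele); [done | exact: emin_mono | move=> w _; exact: h].
Qed.

Lemma bigmin_spec (T : finType) (P : pred T) (F : T -> option nat) a :
  \big[emin/None]_(w | P w) F w = Some a -> exists w, P w /\ F w = Some a.
Proof.
have H : (fun x => x = None \/ exists w, P w /\ F w = x) (\big[emin/None]_(w | P w) F w).
  apply: (big_ind (fun x : option nat => x = None \/ exists w, P w /\ F w = x)).
  - by left.
  - move=> x y [->|[w1 [P1 <-]]] [->|[w2 [P2 <-]]] /=.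
    + by left.
    + by right; exists w2.
    + by right; exists w1; case: (F w1).
    + case E1: (F w1) => [b1|]; case E2: (F w2) => [b2|] /=.
      * right; case: (leqP b1 b2) => l.
          by exists w1; split => //; rewrite E1 (minn_idPl l).
        by exists w2; split => //; rewrite E2 (minn_idPr (ltnW l)).
      * by right; exists w1.
      * by right; exists w2.
      * by left.
  - by move=> w Pw; right; exists w.
move: H => /= [->//|[w [Pw E]]] Ha; exists w; by rewrite E.
Qed.

Lemma esucc_mono x y : ele x y -> ele (esucc x) (esucc y).
Proof. by case: x => [a|]; case: y => [b|]. Qed.

Lemma lam_k0 (G : game) (J : seq {set Pl G}) : lam_k J 0 = @lambda0 G.
Proof. by []. Qed.

Lemma lam_mono (G : game) (J : seq {set Pl G}) k : lle (lam_k J k.+1) (lam_k J k).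
Proof.
elim: k => [|k IH] u.
  rewrite lam_kS /update lam_k0; case: ifP => _; last exact: ele_refl.
  rewrite /lambda0; case: ifP => //= _; by case: (esucc _).
rewrite [lam_k J k.+2]lam_kS /update.
case: ifP => g2; last exact: ele_refl.
case: ifP => o; first by case: (lam_k _ _ _).
case: (boolP (in_geq J (nk J k) u)) => g1.
  have -> : lam_k J k.+1 u = esucc (\big[emin/None]_(u' | xedge u u') sup_cost (lam_k J k) (xowner u) u').
    by rewrite lam_kS /update g1 o.
  apply: esucc_mono; apply: bigmin_mono => w; exact: sup_cost_mono.
have -> : lam_k J k.+1 u = None by rewrite lam_kS /update (negbTE g1) stay0 // /lambda0 o.
by case: (esucc _).
Qed.

Definition stepf n x := n * x + n * n.+1 + 1.

Lemma iter_mono n m m' : 0 < n -> m <= m' -> iter m (stepf n) 0 <= iter m' (stepf n) 0.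
Proof.
move=> n0 le; rewrite -(subnKC le); elim: (m' - m) => [|d IH]; first by rewrite addn0.
rewrite addnS iterS; apply: leq_trans IH _; rewrite /stepf.
set x := iter _ _ _; have : x <= n * x by rewrite leq_pmull.
lia.
Qed.

Definition cnt (G : game) (J : seq {set Pl G}) k (I : {set Pl G}) :=
  #|[set v : Vt G | lam_k J k (v, I) != None]|.

Lemma label_bound (G : game) (J : seq {set Pl G}) :
  #|Pl G| <= #|Vt G| -> 0 < #|Vt G| ->
  forall k (u : xvert G) a, lam_k J k u = Some a ->
  a <= iter (#|Vt G| * (#|Pl G| - #|u.2|) + cnt J k u.2) (stepf #|Vt G|) 0.
Proof.
move=> hP hV k; elim: k => [|k IH] [v0 I0] a.
  rewrite lam_k0 /lambda0; by case: ifP => // _ [<-].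
move=> E.
have cnt_mono : forall I, cnt J k I <= cnt J k.+1 I.
  move=> I; apply: subset_leq_card; apply/subsetP => v; rewrite !inE.
  have := lam_mono J k (v, I); case: (lam_k J k.+1 _); case: (lam_k J k _) => //.
case E0: (lam_k J k (v0, I0)) => [a0|].
  have := lam_mono J k (v0, I0); rewrite E E0 /= => le.
  apply: leq_trans le _; apply: leq_trans (IH _ _ E0) _; apply: iter_mono => //.
  rewrite leq_add2l; exact: cnt_mono.
have E' := E.
move: E; rewrite lam_kS /update.
case: ifP => g; last by rewrite E0.
case: ifP => o; first by move=> [<-].
case Eb: (\big[emin/None]_(u' | xedge (v0, I0) u') _) => [s|] //= [<-].
case/bigmin_spec: Eb => w [uw Ew].
set L := iter (#|Vt G| * (#|Pl G| - #|I0|) + cnt J k I0) (stepf #|Vt G|) 0.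
have sub_uw : I0 \subset w.2 by case/andP: uw => _ /eqP ->; exact: subsetUl.
have HL : forall x : xvert G, w.2 \subset x.2 -> forall bb, lam_k J k x = Some bb -> bb <= L.
  move=> x wx bb Ex; apply: leq_trans (IH _ _ Ex) _; apply: iter_mono => //.
  have ux := subset_trans sub_uw wx.
  case: (eqVneq x.2 I0) => [->//|ne].
  have pr : I0 \proper x.2 by rewrite properEneq eq_sym ne ux.
  have h1 := proper_card pr; have h2 := max_card (pred_of_set x.2).
  have h3 : cnt J k x.2 <= #|Vt G| by apply: max_card.
  have -> : #|Pl G| - #|I0| = (#|Pl G| - #|x.2|) + (#|x.2| - #|I0|) by lia.
  rewrite mulnDr -addnA leq_add2l; apply: leq_trans h3 _.
  apply: leq_trans (leq_addr _ _); rewrite leq_pmulr //; lia.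
have hs := key HL Ew.
have cgt : cnt J k I0 < cnt J k.+1 I0.
  apply: proper_card; rewrite properE; apply/andP; split.
    apply/subsetP => v; rewrite !inE; have := lam_mono J k (v, I0).
    case: (lam_k J k.+1 _); case: (lam_k J k _) => //.
  apply/subsetPn; exists v0; rewrite !inE.
    by rewrite E'.
  by rewrite E0.
have : s.+1 <= stepf #|Vt G| L.
  rewrite /stepf; have : #|Pl G| * L <= #|Vt G| * L by rewrite leq_mul2r hP orbT.
  have : #|Vt G| * (#|Pl G|).+1 <= #|Vt G| * (#|Vt G|).+1 by rewrite leq_mul2l ltnS hP orbT.
  lia.
move=> h; apply: leq_trans h _; rewrite /L -iterS; apply: iter_mono => //.
rewrite -addnS leq_add2l; exact: cgt.
Qed.

Lemma iter_bound n t : 2 <= n -> iter t (stepf n) 0 + (2 * n + 3) <= n ^ t * (2 * n + 3).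
Proof.
move=> n2; elim: t => [|t IH]; first by rewrite /= expn0 mul1n.
rewrite iterS expnS -mulnA; set x := iter t _ _.
apply: leq_trans (_ : n * (x + (2 * n + 3)) <= _); last by rewrite leq_mul2l IH orbT.
rewrite /stepf; nia.
Qed.

Theorem corollary3p13 :
  exists C : nat,
  forall (G : game) (J : seq {set Pl G}),
    2 <= #|Vt G| ->
    #|Pl G| <= #|Vt G| ->
    (forall v : Vt G, exists v' : Vt G, edge G v v') ->
    valid_order J ->
    forall (v : xvert G) (l : nat),
      1 <= l <= (size J).-1 ->
      v.2 = Jn J l ->
      forall (k : nat) (i : Pl G) (c : nat),
        sup_cost (lam_k J k) i v = Some c ->
        c <= C * #|Vt G| ^ ((#|Vt G| + 3) * (#|Pl G| + 2)).
Proof.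
exists 2 => G J hV hP _ _ v l _ _ k i c Hc.
have hV0 : 0 < #|Vt G| by lia.
set n := #|Vt G| in hV hP hV0 *.
set m := #|Pl G| in hP *.
set t := n * m + n.
set Ls := iter t (stepf n) 0.
have HL : forall x : xvert G, v.2 \subset x.2 -> forall bb, lam_k J k x = Some bb -> bb <= Ls.
  move=> x _ bb Ex; apply: leq_trans (@label_bound _ _ hP hV0 _ _ _ Ex) _; apply: iter_mono => //.
  have h3 : cnt J k x.2 <= n by apply: max_card.
  rewrite /t; apply: leq_add => //; rewrite leq_mul2l; apply/orP; right; exact: leq_subr.
have hc := key HL Hc; rewrite -/m -/n in hc.
have hX := iter_bound t hV; rewrite -/Ls in hX.
set X := n ^ t in hX.
have X1 : 1 <= X by rewrite /X expn_gt0 hV0.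
have h3 : 2 * n + 3 <= n * n * n by nia.
have hL : Ls <= X * (n * n * n) by nia.
have hc2 : c <= X * (n * n * n * n) + X * (n * n * n * n).
  have e1 : m * Ls <= n * (X * (n * n * n)) by apply: leq_mul.
  have e2 : n * m.+1 <= n * n.+1 by rewrite leq_mul2l ltnS hP orbT.
  have e3 : n * n.+1 <= n * n * n * n by nia.
  have e4 : n * n * n * n <= X * (n * n * n * n) by rewrite leq_pmull.
  nia.
apply: leq_trans hc2 _.
have -> : X * (n * n * n * n) = n ^ (t + 4) by rewrite expnD /X !expnS expn0 muln1 !mulnA.
rewrite addnn -mul2n leq_mul2l /=; apply: leq_pexp2l => //.
rewrite /t; nia.
Qed.
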